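(* Let $q\ge2$ and $n>h\ge1$. For all integers $r\in\{0,1,\dots,h\}$ and $l\in\{r,\dots,q\}$, $$M_q(n,h)\le\frac{\binom{n+h-2r+q-1}{q-1}}{\binom lr\binom{q-1+h-2r}{h-r}}+\sum_{i=1}^{l-1}\binom qi\binom{n-1}{i-1}$$ (the right-hand side being interpreted as $+\infty$ if the denominator vanishes). In particular, taking $r=0,l=1$, $M_q(n,h)\le\binom{n+h+q-1}{q-1}\big/\binom{q-1+h}{h}$.
   Context: $\triangle_n^{q-1}=\{\mathbf x\in\mathbb Z^q:x_i\ge0,\sum_ix_i=n\}$, $d_1(\mathbf x,\mathbf y)=\frac12\sum_i|x_i-y_i|$. $M_q(n,h)$ is the largest size of a subset of $\triangle_n^{q-1}$ with pairwise $d_1$-distances $>h$ (equivalently, the largest multiset code of length $n$ over a $q$-ary alphabet correcting $h$ deletions). Convention: $\binom ab=0$ for integers $a<b$ with $a\ge0$. *)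

(* Defs.v *)
From HB Require Import structures.
From mathcomp Require Import all_boot all_order all_algebra.
Set Implicit Arguments. Unset Strict Implicit. Unset Printing Implicit Defensive.
Import Order.TTheory GRing.Theory Num.Theory.

(* Points: functions 'I_q -> {0..n}; the simplex triangle_n^{q-1} is the set of
   those whose coordinates sum to n (every simplex point has coordinates <= n). *)
Definition point (q n : nat) := {ffun 'I_q -> 'I_n.+1}.

Definition in_simplex (q n : nat) (x : point q n) : bool :=
  (\sum_(i < q) (x i : nat) == n)%N.

Definition d1 (q n : nat) (x y : point q n) : rat :=
  ((\sum_(i < q) `|(x i : nat) - (y i : nat)|)%N)%:R / 2%:R.

Definition is_code (q n h : nat) (C : {set point q n}) : bool :=
  [forall x in C, in_simplex x] &&
  [forall x in C, forall y in C, (x != y) ==> (h%:R < d1 x y)%R].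

Definition M (q n h : nat) : nat :=
  \max_(C : {set point q n} | is_code h C) #|C|.

(* Main.v *)
Require Import Defs.
From HB Require Import structures.
From mathcomp Require Import all_boot all_order all_algebra.
From mathcomp Require Import zify ring lra.
Import Order.TTheory GRing.Theory Num.Theory.

Lemma tuple_count m s :
  #|[set t : m.-tuple 'I_s.+1 | \sum_(i <- t) (i : nat) == s]| = 'C(m + s - 1, s).
Proof.
case: m => [|k].
  case: s => [|s].
    apply: (@eq_card1 _ [tuple]) => t; rewrite [t]tuple0 in_set big_nil.
    by rewrite inE; transitivity true; [done | symmetry; exact: eqxx].
  rewrite bin_small; last lia.
  apply: eq_card0 => t; rewrite [t]tuple0 in_set big_nil //.
rewrite card_ord_partitions -bin_sub; last lia.
congr 'C(_, _); lia.
Qed.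
Section C.
Variables (q s : nat) (x0 : 'I_q) (D : {set 'I_q}).
Definition zoff (b : {ffun 'I_q -> 'I_s.+1}) := [forall j, (j \notin D) ==> ((b j : nat) == 0)].
Definition ftup (b : {ffun 'I_q -> 'I_s.+1}) : #|D|.-tuple 'I_s.+1 := [tuple of map b (enum D)].
Definition gtup (t : #|D|.-tuple 'I_s.+1) : {ffun 'I_q -> 'I_s.+1} :=
  [ffun i => if i \in D then nth ord0 t (index i (enum D)) else ord0].

Lemma sum_ftup b : zoff b -> \sum_(i <- ftup b) (i : nat) = \sum_(j < q) (b j : nat).
Proof.
move=> /forallP zb; rewrite /ftup /= big_map big_enum /= [RHS](bigID (mem D)) /=.
rewrite [X in _ = _ + X]big1 ?addn0 // => j jD.
by apply/eqP; move: (zb j); rewrite jD.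
Qed.

Lemma zoff_gtup t : zoff (gtup t).
Proof. by apply/forallP => j; apply/implyP => jD; rewrite ffunE (negbTE jD). Qed.

Lemma fg : cancel gtup ftup.
Proof.
move=> t; apply: val_inj => /=; apply: (@eq_from_nth _ ord0).
  by rewrite size_map size_tuple -cardE.
move=> j; rewrite size_map => jlt.
rewrite (nth_map x0) // ffunE.
have -> : nth x0 (enum D) j \in D by rewrite -mem_enum mem_nth.
by rewrite index_uniq ?enum_uniq.
Qed.

Lemma gf b : zoff b -> gtup (ftup b) = b.
Proof.
move=> /forallP zb; apply/ffunP => i; rewrite ffunE.
case: ifP => iD.
  rewrite /ftup /= (nth_map i) ?nth_index ?mem_enum // index_mem mem_enum //.
apply: val_inj => /=; apply/esym/eqP; move: (zb i); by rewrite iD.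
Qed.

Lemma count_off :
  #|[set b : {ffun 'I_q -> 'I_s.+1} | zoff b && (\sum_(j < q) (b j : nat) == s)]|
  = 'C(#|D| + s - 1, s).
Proof.
rewrite -(tuple_count #|D| s).
set X := [set b | _].
have inj : {in X &, injective ftup}.
  move=> b1 b2; rewrite !inE => /andP[z1 _] /andP[z2 _] e.
  by rewrite -(@gf b1 z1) -(@gf b2 z2) e.
rewrite -(card_in_imset inj); apply: eq_card => t; rewrite inE.
apply/imsetP/idP.
  by move=> [b]; rewrite inE => /andP[zb sb] ->; rewrite sum_ftup.
move=> st; exists (gtup t); last by rewrite fg.
by rewrite inE zoff_gtup /= -sum_ftup ?zoff_gtup // fg.
Qed.
End C.
Arguments zoff {q s}.
Arguments count_off {q s}.


Definition ssum q B (x : {ffun 'I_q -> 'I_B.+1}) := \sum_(i < q) (x i : nat).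
Definition supp q B (x : {ffun 'I_q -> 'I_B.+1}) : {set 'I_q} := [set i | (x i : nat) != 0].
Arguments ssum {q B}.
Arguments supp {q B}.

Lemma term_le_sum q (F : 'I_q -> nat) j : F j <= \sum_(k < q) F k.
Proof. by rewrite (bigD1 j) //= leq_addr. Qed.
Arguments term_le_sum {q}.

Lemma sum_ind q (D : {set 'I_q}) : \sum_(j < q) ((j \in D) : nat) = #|D|.
Proof.
rewrite -sum1_card [RHS]big_mkcond /=; apply: eq_bigr => j _; by case: (j \in D).
Qed.

Lemma sum_sub_ind q B (x : {ffun 'I_q -> 'I_B.+1}) (D : {set 'I_q}) :
  D \subset supp x ->
  \sum_(j < q) ((x j : nat) - (j \in D)) + #|D| = ssum x.
Proof.
move=> /subsetP sD; rewrite -sum_ind /ssum.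
have -> : \sum_(j < q) (x j : nat) = \sum_(j < q) (((x j : nat) - (j \in D)) + (j \in D)).
  apply: eq_bigr => j _; case jD: (j \in D) => /=; last by rewrite subn0 addn0.
  move: (sD j jD); rewrite inE => nz; lia.
by rewrite big_split.
Qed.
Arguments sum_sub_ind {q B x D}.

Lemma supp_count q n (x0 : 'I_q) (D : {set 'I_q}) : 0 < #|D| ->
  #|[set x : point q n | (ssum x == n) && (supp x == D)]| <= 'C(n - 1, #|D| - 1).
Proof.
move=> Dpos.
set X := [set x | _].
have [X0|[x1 Xx1]] := set_0Vmem X; first by rewrite X0 cards0.
have iln : #|D| <= n.
  move: Xx1; rewrite inE => /andP[/eqP sx /eqP sD]; rewrite -sD.
  have := sum_sub_ind (subxx (supp x1)); lia.
pose phi (x : point q n) : {ffun 'I_q -> 'I_(n - #|D|).+1} := [ffun j => inord ((x j : nat) - 1)].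
have phiE x j : x \in X -> (phi x j : nat) = (x j : nat) - 1.
  rewrite inE => /andP[/eqP sx /eqP sD]; rewrite ffunE inordK // ltnS.
  have := sum_sub_ind (subxx (supp x)); rewrite sx.
  have := term_le_sum (fun j => (x j : nat) - (j \in supp x)) j.
  move=> T S; rewrite inE /= in T; rewrite sD in S T; move: T S.
  case: (nat_of_ord (x j)) => [|k] /=; lia.
have inj : {in X &, injective phi}.
  move=> x y xX yX e; apply/ffunP => j; apply: val_inj => /=.
  have E1 := phiE x j xX; have E2 := phiE y j yX; rewrite e E2 in E1.
  move: xX yX; rewrite !inE => /andP[_ /eqP sx] /andP[_ /eqP sy].
  have : (j \in supp x) = (j \in supp y) by rewrite sx sy.
  rewrite !inE; move: E1; case: (nat_of_ord (x j)) => [|a]; case: (nat_of_ord (y j)) => [|b] //=; lia.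
rewrite -(card_in_imset inj).
apply: leq_trans (_ : #|[set b : {ffun 'I_q -> 'I_(n - #|D|).+1} | zoff D b && (\sum_(j < q) (b j : nat) == n - #|D|)]| <= _).
  apply: subset_leq_card; apply/subsetP => b /imsetP[x xX ->]; rewrite inE.
  apply/andP; split.
    apply/forallP => j; apply/implyP => jD; rewrite phiE //.
    move: xX; rewrite inE => /andP[_ /eqP sD]; move: jD; rewrite -sD inE negbK => /eqP ->.
    done.
  have := xX; rewrite inE => /andP[/eqP sx /eqP sD].
  have S := sum_sub_ind (subxx (supp x)); rewrite sx sD in S.
  have -> : \sum_(j < q) (phi x j : nat) = \sum_(j < q) ((x j : nat) - (j \in D)).
    apply: eq_bigr => j _; rewrite phiE // -sD inE; by case: (nat_of_ord (x j)).
  apply/eqP; apply/(@addIn #|D|); rewrite subnK //; exact: S.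
rewrite count_off //.
have -> : #|D| + (n - #|D|) - 1 = n - 1 by lia.
rewrite -bin_sub; last lia.
have -> : n - 1 - (n - #|D|) = #|D| - 1 by lia.
by [].
Qed.


Lemma sum_by_card q (G : nat -> nat) l :
  \sum_(D : {set 'I_q} | 0 < #|D| < l) G #|D| = \sum_(1 <= i < l) 'C(q, i) * G i.
Proof.
elim: l => [|l IH].
  rewrite big_geq // big_pred0 // => D; by rewrite ltn0 andbF.
case: l IH => [|l] IH.
  rewrite big_geq // big_pred0 // => D; by case: #|D|.
rewrite big_nat_recr //= -IH (bigID (fun D : {set 'I_q} => #|D| == l.+1)) /= addnC.
congr (_ + _).
  apply: eq_bigl => D; lia.
rewrite (eq_bigl (fun D : {set 'I_q} => #|D| == l.+1)); last first.
  by move=> D; case: eqP => [->|_]; rewrite ?andbT ?andbF //= ltnSn.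
rewrite (eq_bigr (fun _ => G l.+1)); last by move=> D /eqP ->.
by rewrite sum_nat_cond_const card_draws card_ord.
Qed.

Lemma low_count q n l (x0 : 'I_q) : 0 < n ->
  #|[set x : point q n | (ssum x == n) && (#|supp x| < l)]|
  <= \sum_(1 <= i < l) 'C(q, i) * 'C(n - 1, i - 1).
Proof.
move=> npos.
rewrite -sum1dep_card (partition_big supp (fun D : {set 'I_q} => 0 < #|D| < l)) /=; last first.
  move=> x /andP[/eqP sx ->]; rewrite andbT card_gt0; apply/set0Pn.
  apply/existsP; apply: contraTT npos; rewrite negb_exists => /forallP z.
  rewrite -sx /ssum lt0n negbK; apply/eqP; apply: big1 => i _.
  by move: (z i); rewrite inE negbK => /eqP.
rewrite -sum_by_card; apply: leq_sum => D /andP[Dpos _].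
rewrite sum1dep_card; apply: leq_trans (@supp_count q n x0 D Dpos).
apply: subset_leq_card; apply/subsetP => x; rewrite !inE.
by case/andP => /andP[-> _] ->.
Qed.


Lemma distE (a b : nat) : `|a - b|%N = ((a - b) + (b - a))%N.
Proof. case: (leqP a b) => h.
  rewrite distnEr //; lia.
rewrite distnEl; lia. Qed.

Definition ball q n N r (x : point q n) : {set point q N} :=
  [set y | (ssum y == N) && (\sum_(i < q) ((x i : nat) - (y i : nat)) <= r)].
Arguments ball {q n} N r x.

Lemma sum_pos_neg q n N (x : point q n) (y : point q N) :
  \sum_(i < q) ((y i : nat) - (x i : nat)) + ssum x = \sum_(i < q) ((x i : nat) - (y i : nat)) + ssum y.
Proof.
rewrite /ssum -!big_split /=; apply: eq_bigr => i _; lia.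
Qed.
Arguments sum_pos_neg {q n N}.

Lemma arith_disj (P Q P' Q' n N r h : nat) : Q + n = P + N -> Q' + n = P' + N -> P <= r -> P' <= r -> N + 2 * r = n + h -> P + Q + (P' + Q') <= 2 * h.
Proof. lia. Qed.

Lemma ball_disj q n N h r (x x' : point q n) (y : point q N) :
  ssum x = n -> ssum x' = n -> N + 2 * r = n + h ->
  y \in ball N r x -> y \in ball N r x' ->
  \sum_(i < q) `|(x i : nat) - (x' i : nat)|%N <= 2 * h.
Proof.
move=> sx sx' eN; rewrite !inE => /andP[/eqP sy b1] /andP[_ b2].
apply: leq_trans (_ : \sum_(i < q) (`|(x i : nat) - (y i : nat)| + `|(y i : nat) - (x' i : nat)|)%N <= _).
  by apply: leq_sum => i _; apply: leqD_dist.
rewrite big_split /=.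
rewrite (eq_bigr (fun i => ((x i : nat) - (y i : nat)) + ((y i : nat) - (x i : nat)))); last by move=> i _; rewrite distE.
rewrite [X in _ + X <= _](eq_bigr (fun i => ((x' i : nat) - (y i : nat)) + ((y i : nat) - (x' i : nat)))); last by move=> i _; rewrite distE addnC.
rewrite !big_split /=.
have e1 := sum_pos_neg x y; have e2 := sum_pos_neg x' y.
rewrite sx sy in e1; rewrite sx' sy in e2.
exact: (@arith_disj _ _ _ _ _ _ _ _ e1 e2 b1 b2 eN).
Qed.

Lemma arith_sumF a r n h N : a + r = n -> r <= h -> N + 2 * r = n + h -> a + (h - r) = N.
Proof. lia. Qed.

Lemma ball_size q n N h r l (x0 : 'I_q) (x : point q n) :
  ssum x = n -> l <= #|supp x| -> r <= h -> r <= q -> N + 2 * r = n + h ->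
  'C(l, r) * 'C(q + h - 1 - 2 * r, h - r) <= #|ball N r x|.
Proof.
move=> sx lsupp rh rq eN.
set s := h - r.
pose P := [set p : {set 'I_q} * {ffun 'I_q -> 'I_s.+1} |
   ((p.1 \subset supp x) && (#|p.1| == r)) && (zoff (~: p.1) p.2 && (\sum_(j < q) (p.2 j : nat) == s))].
have cardP : #|P| = 'C(#|supp x|, r) * 'C(q + h - 1 - 2 * r, s).
  rewrite -sum1dep_card -(pair_big_dep (fun A : {set 'I_q} => (A \subset supp x) && (#|A| == r))
     (fun A b => zoff (~: A) b && (\sum_(j < q) (b j : nat) == s)) (fun _ _ => 1)) /=.
  rewrite (eq_bigr (fun _ => 'C(q + h - 1 - 2 * r, s))).
    by rewrite sum_nat_cond_const cards_draws.
  move=> A /andP[_ /eqP cA]; rewrite sum1dep_card count_off //.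
  have := cardsC A; rewrite card_ord cA => e.
  congr 'C(_, _); rewrite /s; lia.
pose psi (p : {set 'I_q} * {ffun 'I_q -> 'I_s.+1}) : point q N :=
  [ffun i => inord ((x i : nat) - (i \in p.1) + (p.2 i : nat))].
have hA p i : p \in P -> i \in p.1 -> 0 < (x i : nat) /\ (p.2 i : nat) = 0.
  rewrite inE => /andP[/andP[/subsetP sA _] /andP[/forallP z _]] iA; split.
    by move: (sA i iA); rewrite inE lt0n.
  by move: (z i); rewrite inE iA /= => /eqP.
have sumF p : p \in P -> \sum_(i < q) ((x i : nat) - (i \in p.1) + (p.2 i : nat)) = N.
  rewrite inE => /andP[/andP[sA /eqP cA] /andP[_ /eqP sb]].
  rewrite big_split /=; have := sum_sub_ind sA; rewrite sx cA sb /s => e.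
  exact: (@arith_sumF _ _ _ _ _ e rh eN).
have psiE p i : p \in P -> (psi p i : nat) = (x i : nat) - (i \in p.1) + (p.2 i : nat).
  move=> pP; rewrite ffunE inordK // ltnS.
  have := term_le_sum (fun i => (x i : nat) - (i \in p.1) + (p.2 i : nat)) i.
  by rewrite sumF.
have inj : {in P &, injective psi}.
  move=> [A1 b1] [A2 b2] p1P p2P e.
  have E i : (x i : nat) - (i \in A1) + (b1 i : nat) = (x i : nat) - (i \in A2) + (b2 i : nat).
    by rewrite -(psiE _ i p1P) -(psiE _ i p2P) e.
  have eA : A1 = A2.
    apply/setP => i; have := E i.
    case h1: (i \in A1); case h2: (i \in A2) => //=.
      have [H1 H2] := hA _ i p1P h1; simpl in H1, H2; lia.
    have [H1 H2] := hA _ i p2P h2; simpl in H1, H2; lia.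
  subst A2; congr (_, _); apply/ffunP => i; apply: val_inj => /=.
  by apply/(@addnI ((x i : nat) - (i \in A1))); exact: E.
have sub : psi @: P \subset ball N r x.
  apply/subsetP => y /imsetP[p pP ->]; rewrite inE; apply/andP; split.
    by rewrite /ssum (eq_bigr _ (fun i _ => psiE p i pP)) sumF.
  rewrite (eq_bigr (fun i => ((i \in p.1) : nat))); last first.
    move=> i _; rewrite psiE //; case iA: (i \in p.1) => /=.
      have [H1 H2] := hA _ i pP iA; rewrite H2 addn0; move: H1.
      by case: (nat_of_ord (x i)) => // k _; rewrite subn1 /= subSnn.
    by rewrite subn0 subnDA subnn.
  by rewrite sum_ind; move: pP; rewrite inE => /andP[/andP[_ /eqP ->] _].
apply: leq_trans (subset_leq_card sub); rewrite (card_in_imset inj) cardP.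
by rewrite leq_mul2r leq_bin2l ?orbT.
Qed.


Lemma total_count q N : 0 < q ->
  #|[set y : point q N | ssum y == N]| = 'C(N + q - 1, q - 1).
Proof.
move=> qpos; have x0 : 'I_q := Ordinal qpos.
have -> : [set y : point q N | ssum y == N] = [set b : {ffun 'I_q -> 'I_N.+1} | zoff setT b && (\sum_(j < q) (b j : nat) == N)].
  apply/setP => y; rewrite !inE.
  have -> : zoff setT y by apply/forallP => j; rewrite inE.
  by [].
rewrite (count_off x0) cardsT card_ord -bin_sub; last lia.
congr 'C(_, _); lia.
Qed.

Lemma high_count q n N h r l (x0 : 'I_q) (C : {set point q n}) :
  is_code h C -> r <= h -> r <= q -> N + 2 * r = n + h ->
  #|C :&: [set x | l <= #|supp x|]| * ('C(l, r) * 'C(q + h - 1 - 2 * r, h - r))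
  <= #|[set y : point q N | ssum y == N]|.
Proof.
move=> /andP[/forallP Csimp /forallP Cdist] rh rq eN.
set H := C :&: _.
have HC x : x \in H -> (x \in C) /\ ssum x = n /\ l <= #|supp x|.
  rewrite !inE => /andP[xC lx]; split => //; split => //.
  by move: (Csimp x); rewrite xC => /eqP.
rewrite -sum_nat_const.
apply: leq_trans (_ : \sum_(x in H) #|ball N r x| <= _).
  apply: leq_sum => x /HC [_ [sx lx]]; exact: ball_size.
rewrite (eq_bigr (fun x => \sum_(y : point q N) (y \in ball N r x : nat))); last first.
  by move=> x _; rewrite -sum1_card big_mkcond /=; apply: eq_bigr => y _; case: (y \in _).
rewrite exchange_big /= -sum1dep_card [X in _ <= X]big_mkcond /=.
apply: leq_sum => y _.
case: ifP => sy.
  rewrite -big_mkcondr /= sum1dep_card.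
  apply/card_le1_eqP => x x'; rewrite !inE => /andP[xH yx] /andP[x'H yx'].
  have xH2 : x \in H by rewrite !inE.
  have x'H2 : x' \in H by rewrite !inE.
  have yx2 : y \in ball N r x by rewrite inE.
  have yx'2 : y \in ball N r x' by rewrite inE.
  apply/eqP; apply: contraT; rewrite eq_sym => ne.
  have [xC [sx _]] := HC x xH2; have [x'C [sx' _]] := HC x' x'H2.
  have := @ball_disj _ _ _ _ _ _ _ _ sx sx' eN yx2 yx'2.
  move: (Cdist x); rewrite xC => /forallP /(_ x'); rewrite x'C ne /= /d1.
  move=> lt le; move: lt; rewrite ltr_pdivlMr ?ltr0n // -natrM ltr_nat.
  by rewrite mulnC ltnNge le.
rewrite big1 // => x _; by rewrite inE sy.
Qed.

Theorem mainTheorem18 (q n h r l : nat) :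
  (2 <= q)%N -> (1 <= h)%N -> (h < n)%N ->
  (r <= h)%N -> (r <= l)%N -> (l <= q)%N ->
  ('C(l, r) * 'C(q + h - 1 - 2 * r, h - r) != 0)%N ->
  ((M q n h)%:R <=
     ('C(n + h + q - 1 - 2 * r, q - 1))%:R
       / ('C(l, r) * 'C(q + h - 1 - 2 * r, h - r))%:R
     + (\sum_(1 <= i < l) 'C(q, i) * 'C(n - 1, i - 1))%:R :> rat)%R.
Proof.
move=> q2 h1 hn rh rl lq Kne.
have qpos : (0 < q)%N by lia.
have x0 : 'I_q := Ordinal qpos.
have npos : (0 < n)%N by lia.
pose N := (n + h - 2 * r)%N.
have eN : (N + 2 * r = n + h)%N by rewrite /N; lia.
rewrite /M; apply: (big_ind (fun m : nat => (m%:R <= _ :> rat)%R)).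
- by rewrite addr_ge0 ?divr_ge0 ?ler0n.
- by move=> a b Ha Hb; rewrite /maxn; case: ifP.
move=> C codeC.
rewrite -(cardsID [set x | (l <= #|supp x|)%N] C) natrD.
apply: lerD.
  rewrite ler_pdivlMr ?ltr0n ?lt0n // -natrM ler_nat.
  have -> : 'C(n + h + q - 1 - 2 * r, q - 1) = #|[set y : point q N | ssum y == N]|.
    by rewrite total_count //; congr 'C(_, _); rewrite /N; lia.
  apply: high_count => //; lia.
rewrite ler_nat; apply: leq_trans (@low_count q n l x0 npos).
apply: subset_leq_card; apply/subsetP => x; rewrite !inE => /andP[nl xC].
move: codeC => /andP[/forallP /(_ x) Cs _]; rewrite xC /= in Cs.
by apply/andP; split; [exact: Cs | rewrite ltnNge nl].
Qed.
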